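(* Let $S$ be a finite semigroup and let $I$ be an ideal of $S$ (possibly $I=\varnothing$). Then $$\mathbf{Sub}(S)=\big\{\langle (U\setminus\{0\})\cup L \rangle \;\big|\; U\in \mathbf{Sub}(S/I),\ L\in\mathbf{Sub}(I)\big\},$$ where for each $U\in\mathbf{Sub}(S/I)$ the set $U\setminus\{0\}$ is regarded as a subset of $S\setminus I\subseteq S$, and the generated subsemigroup $\langle\cdot\rangle$ is taken in $S$.
   Context: For a semigroup $X$, $\mathbf{Sub}(X)$ denotes the set of all subsemigroups of $X$, where the empty set is considered a subsemigroup (so $\varnothing\in\mathbf{Sub}(X)$). For $A\subseteq S$, $\langle A\rangle$ denotes the least subsemigroup of $S$ containing $A$ (so $\langle\varnothing\rangle=\varnothing$). For an ideal $I$ of $S$, the Rees factor semigroup $S/I$ has elements $(S\setminus I)\cup\{0\}$, where $0$ is a new symbol not in $S$, with multiplication $s\cdot t=st$ if $s,t,st\in S\setminus I$, and $s\cdot t=0$ otherwise (in particular $S/\varnothing\cong S^0$, $S$ with a zero adjoined). A subsemigroup of $S/I$ need not contain $0$. *)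

(* Defs.v *)
(* A finite semigroup is a finType T with an associative
   binary operation op (associativity is a hypothesis of the theorem). *)
From mathcomp Require Import all_boot.
Set Implicit Arguments. Unset Strict Implicit. Unset Printing Implicit Defensive.

Section Semigroup.
Variables (T : finType) (op : T -> T -> T).

Definition is_subsemigroup (A : {set T}) : Prop :=
  forall x y, x \in A -> y \in A -> op x y \in A.

(* Least subsemigroup containing A: intersection of all subsemigroups
   containing A (so gen set0 = set0). *)
Definition gen (A : {set T}) : {set T} :=
  \bigcap_(B : {set T} | [forall x, forall y,
       (x \in B) ==> (y \in B) ==> (op x y \in B)] && (A \subset B)) B.

Definition is_ideal (I : {set T}) : Prop :=
  forall s x, x \in I -> op s x \in I /\ op x s \in I.

(* Rees factor S/I: carrier (S \ I) ∪ {0}, modelled inside option T,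
   with None = the new zero and Some s (s \notin I) = s. *)
Definition rees_carrier (I : {set T}) : {set option T} :=
  None |: [set Some s | s in ~: I].

Definition rees_op (I : {set T}) (u v : option T) : option T :=
  match u, v with
  | Some s, Some t =>
      if (s \notin I) && (t \notin I) && (op s t \notin I)
      then Some (op s t) else None
  | _, _ => None
  end.

Definition is_rees_subsemigroup (I : {set T}) (U : {set option T}) : Prop :=
  U \subset rees_carrier I /\
  forall u v, u \in U -> v \in U -> rees_op I u v \in U.

Definition rees_strip (U : {set option T}) : {set T} :=
  [set s | Some s \in U].

End Semigroup.

(* Main.v *)
Require Import Defs.
From mathcomp Require Import all_boot.


Lemma gen_closed (T : finType) (op : T -> T -> T) (A : {set T}) :
  is_subsemigroup op (gen op A).
Proof.
move=> x y hx hy; apply/bigcapP => B hB.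
have hx' := bigcapP hx B hB; have hy' := bigcapP hy B hB.
case/andP: hB => /forallP hB _.
by have /implyP/(_ hx')/implyP/(_ hy') := forallP (hB x) y.
Qed.

Lemma gen_id (T : finType) (op : T -> T -> T) (A : {set T}) :
  is_subsemigroup op A -> gen op A = A.
Proof.
move=> hA; apply/eqP; rewrite eqEsubset; apply/andP; split.
  apply: bigcap_inf; rewrite subxx andbT.
  by apply/forallP => x; apply/forallP => y; apply/implyP => hx; apply/implyP => hy; apply: hA.
by apply/bigcapsP => B /andP [_ ->].
Qed.

Theorem lemma4p1 (T : finType) (op : T -> T -> T)
  (op_assoc : forall x y z, op x (op y z) = op (op x y) z)
  (I : {set T}) (hI : is_ideal op I) :
  forall A : {set T},
    is_subsemigroup op A <->
    exists (U : {set option T}) (L : {set T}),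
      [/\ is_rees_subsemigroup op I U,
          is_subsemigroup op L, L \subset I &
          A = gen op (rees_strip U :|: L)].
Proof.
move=> A; split; last first.
  by case=> U [L [_ _ _ ->]]; apply: gen_closed.
move=> hA.
exists (None |: [set Some s | s in A :\: I]), (A :&: I); split.
- split.
    apply/subsetP => u; rewrite !inE; case/orP => [->//|/imsetP [s]].
    rewrite !inE => /andP [hs _] ->; apply/orP; right.
    by apply/imsetP; exists s; rewrite // !inE.
  move=> [s|] [t|] //=; rewrite !inE ?eqxx //.
  case/orP=> // /imsetP [s' hs' [->]]; case/orP=> // /imsetP [t' ht' [->]].
  move: hs' ht'; rewrite !inE => /andP [hs1 hs2] /andP [ht1 ht2].
  rewrite hs1 ht1 /=; case: ifP => // hst.
  apply/orP; right; apply/imsetP; exists (op s' t') => //.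
  by rewrite !inE hst hA.
- move=> x y; rewrite !inE => /andP [hx hxI] /andP [hy _].
  by rewrite hA //; case: (hI y x hxI).
- exact: subsetIr.
rewrite -[LHS](@gen_id T op A hA); congr gen.
apply/setP => x; rewrite /rees_strip !inE.
case hx: (x \in I); rewrite ?andbT ?andbF ?orbF /=.
  have -> : (Some x \in [set Some s | s in A :\: I]) = false.
    by rewrite (mem_imset _ _ (@Some_inj _)) !inE hx.
  by [].
by rewrite (mem_imset _ _ (@Some_inj _)) !inE hx.
Qed.
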